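(* Let $(p_n)$ be a sequence in $(0,1)$ such that $\alpha=\lim_{n\to\infty}p_n\log n$ exists with $0<\alpha<\infty$, and let $\gamma>0$. For the torn-paper channel with block length $n$ and tearing probability $p_n$, let $\mathcal Y_\gamma$ be the collection of output fragments $\vec Y_i$ whose underlying length satisfies $N_{\pi_i}\ge\gamma\log n$, and $|\mathcal Y_\gamma|$ their number. Then for any $\epsilon>0$, $$\lim_{n\to\infty}\Pr\left(\big||\mathcal Y_\gamma| - e^{-\alpha\gamma} n p_n\big|>\epsilon n p_n\right)=0.$$
   Context: Logarithms are base 2. The torn-paper channel with block length $n$ and tearing probability $p_n$: the input $X^n\in\{0,1\}^n$ is cut into consecutive fragments $\vec X_1,\dots,\vec X_K$, where $N_1,N_2,\dots$ are i.i.d. $\mathrm{Geometric}(p_n)$ (support $\{1,2,\dots\}$, mean $1/p_n$), $K$ is the smallest index with $\sum_{i=1}^K N_i\ge n$, $\vec X_i$ consists of positions $1+\sum_{j<i}N_j$ through $\sum_{j\le i}N_j$ for $i<K$, and $\vec X_K$ of positions $1+\sum_{j<K}N_j$ through $n$. Given $K$, $\pi$ is a uniformly random permutation of $\{1,\dots,K\}$ and the output is the unordered collection $\{\vec Y_1,\dots,\vec Y_K\}$ with $\vec Y_i=\vec X_{\pi_i}$. Thus $|\mathcal Y_\gamma|=\sum_{i=1}^K \mathbf 1\{N_i\ge\gamma\log n\}$. *)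

(* Defs.v *)
From HB Require Import structures.
From mathcomp Require Import all_boot all_order all_algebra.
From mathcomp Require Import all_classical all_reals all_analysis.
Set Implicit Arguments. Unset Strict Implicit. Unset Printing Implicit Defensive.
Import Order.TTheory GRing.Theory Num.Theory.
Local Open Scope classical_set_scope.
Local Open Scope ring_scope.

Definition log2 {R : realType} (x : R) : R := ln x / ln 2.

Definition geom_pmf {R : realType} (p : R) (k : nat) : R :=
  if k is k'.+1 then (1 - p) ^+ k' * p else 0.

(* Fragment lengths N_1..N_n are x 0, ..., x (n-1).  K = smallest index k
   (1 <= k) with N_1 + ... + N_k >= n.  Since each N_i >= 1, K <= n a.s. *)
Definition Ktear (n : nat) (x : {ffun 'I_n -> nat}) : nat :=
  (find (fun k => n <= \sum_(i < n | (i < k)%N) x i)%N (iota 1 n)).+1.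

Definition long_frag {R : realType} (gamma : R) (n k : nat) : bool :=
  gamma * log2 (n%:R : R) <= (k%:R : R).

Definition Ygamma {R : realType} (gamma : R) (n : nat) (x : {ffun 'I_n -> nat}) : nat :=
  (\sum_(i < n | (i < Ktear x)%N) nat_of_bool (long_frag gamma n (x i)))%N.

(* Joint law of the i.i.d. Geometric(p) lengths N_1..N_n (which determine
   K and |Y_gamma|): probability of an event E. *)
Definition geom_prob {R : realType} (p : R) (n : nat) (E : {ffun 'I_n -> nat} -> Prop)
  : \bar R :=
  \esum_(x in [set x | E x]) ((\prod_(i < n) geom_pmf p (x i))%:E).
Arguments geom_prob {R} p n E.

(* Main.v *)
Require Import Defs.
From HB Require Import structures.
From mathcomp Require Import all_boot all_order all_algebra.
From mathcomp Require Import all_classical all_reals all_analysis.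
From mathcomp Require Import lra ring zify.
Import Order.TTheory GRing.Theory Num.Theory.
Import numFieldNormedType.Exports.
Local Open Scope classical_set_scope.
Local Open Scope ring_scope.


Section esumZ.
Context {R : realType} {T : choiceType}.
Local Open Scope ereal_scope.

Lemma esumZl (I : set T) (a : T -> \bar R) (c : R) :
  (0 <= c)%R -> (forall i, 0 <= a i) ->
  \esum_(i in I) (c%:E * a i) = c%:E * \esum_(i in I) a i.
Proof.
move=> c0 a0; rewrite /esum -ereal_supZl//; last first.
  by apply/set0P; exists 0; exists set0; [exact: fsets_set0|rewrite fsbig_set0].
congr ereal_sup; apply/seteqP; split=> y /=.
  case=> A FA <-; exists (\sum_(x \in A) a x); first by exists A.
  by rewrite ge0_mule_fsumr.
case=> _ [A FA <-] <-; exists A => //; by rewrite ge0_mule_fsumr.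
Qed.

Lemma esumZr (I : set T) (a : T -> \bar R) (c : R) :
  (0 <= c)%R -> (forall i, 0 <= a i) ->
  \esum_(i in I) (a i * c%:E) = (\esum_(i in I) a i) * c%:E.
Proof.
move=> c0 a0; rewrite [RHS]muleC -esumZl//; apply: eq_esum => i _; exact: muleC.
Qed.
End esumZ.

Definition cons_ffun n (k : nat) (y : {ffun 'I_n -> nat}) : {ffun 'I_n.+1 -> nat} :=
  [ffun i => if unlift ord0 i is Some j then y j else k].
Arguments cons_ffun {n}.

Lemma cons_ffun0 n k (y : {ffun 'I_n -> nat}) : cons_ffun k y ord0 = k.
Proof. by rewrite ffunE unlift_none. Qed.
Arguments cons_ffun0 {n}.

Lemma cons_ffunS n k (y : {ffun 'I_n -> nat}) i : cons_ffun k y (lift ord0 i) = y i.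
Proof. by rewrite ffunE liftK. Qed.
Arguments cons_ffunS {n}.

Section esum_prod.
Context {R : realType}.
Local Open Scope ereal_scope.

Lemma esum_prod n (F : 'I_n -> nat -> R) (s : 'I_n -> R) :
  (forall i k, (0 <= F i k)%R) ->
  (forall i, \esum_(k in [set: nat]) (F i k)%:E = (s i)%:E) ->
  \esum_(x in [set: {ffun 'I_n -> nat}]) (\prod_(i < n) F i (x i))%:E
   = (\prod_(i < n) s i)%:E.
Proof.
elim: n F s => [|n IH] F s F0 Fs.
  rewrite big_ord0 (_ : [set: {ffun 'I_0 -> nat}] = [set [ffun i => 0%N]]).
    by rewrite esum_set1 ?big_ord0.
  by apply/seteqP; split=> x _ //=; apply/ffunP => -[].
rewrite (reindex_esum [set: nat * {ffun 'I_n -> nat}] _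
          (fun kx => cons_ffun kx.1 kx.2)); last first.
  split.
  - by [].
  - move=> [k y] [k' y'] _ _ /= E.
    have -> : k = k' by rewrite -(cons_ffun0 k y) E cons_ffun0.
    congr pair; apply/ffunP => i.
    by rewrite -(cons_ffunS k y) E cons_ffunS.
  - move=> x _; exists (x ord0, [ffun j => x (lift ord0 j)]) => //=.
    apply/ffunP => i; rewrite ffunE; case: unliftP => [j ->|->] //.
    by rewrite ffunE.
have -> : [set: nat * {ffun 'I_n -> nat}] =
          [set: nat] `*`` (fun=> [set: {ffun 'I_n -> nat}]).
  by apply/seteqP; split.
rewrite -(@esum_esum _ _ _ [set: nat] (fun=> [set: {ffun 'I_n -> nat}])
   (fun k y => (\prod_(i < n.+1) F i (cons_ffun k y i))%:E)); last first.
  by move=> i j _ _; rewrite lee_fin; apply: prodr_ge0.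
have IH' := IH (fun i => F (lift ord0 i)) (fun i => s (lift ord0 i))
   (fun i => F0 _) (fun i => Fs _).
transitivity (\esum_(k in [set: nat])
   ((F ord0 k)%:E * (\prod_(i < n) s (lift ord0 i))%:E)).
  apply: eq_esum => k _.
  under eq_esum do rewrite big_ord_recl cons_ffun0 EFinM.
  rewrite esumZl//; last by move=> y; rewrite lee_fin; apply: prodr_ge0.
  congr (_ * _); rewrite -IH'; apply: eq_esum => y _.
  by under eq_bigr do rewrite cons_ffunS.
rewrite esumZr//; first last.
  - by move=> k; rewrite lee_fin.
  - apply: prodr_ge0 => i _.
    have := Fs (lift ord0 i); move/(congr1 fine) => /= <-.
    by apply: fine_ge0; apply: esum_ge0 => k _; rewrite lee_fin.
by rewrite Fs big_ord_recl EFinM.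
Qed.
End esum_prod.
Section geo.
Context {R : realType}.
Local Open Scope ereal_scope.

Lemma nneseries_EFin (g : nat -> R) (L : R) : series g @ \oo --> L ->
  \sum_(k <oo) (g k)%:E = L%:E.
Proof.
move=> gL; apply: cvg_lim => //.
apply: cvg_EFin; first by apply: nearW => n; rewrite sumEFin.
by apply: cvg_trans gL; apply: near_eq_cvg; apply: nearW => n /=; rewrite sumEFin.
Qed.

Variable p : R.
Hypothesis hp : (0 < p < 1)%R.
Let q := (1 - p)%R.
Let q0 : (0 <= q)%R. Proof. rewrite /q; case/andP: hp => ? ?; lra. Qed.
Let q1 : (`|q| < 1)%R. Proof. rewrite ger0_norm// /q; case/andP: hp => ? ?; lra. Qed.

Lemma geo_tail i : \sum_(k <oo) (((i <= k)%N)%:R * q ^+ k)%:E = (q ^+ i / p)%:E.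
Proof.
rewrite (nneseries_split 0 i); last by move=> k _; rewrite lee_fin mulr_ge0// exprn_ge0.
rewrite big_nat big1 ?add0e; last first.
  move=> k /andP[_]; rewrite add0n => ki.
  by rewrite leqNgt ki mul0r.
rewrite add0n -nneseries_addn; last by move=> k; rewrite lee_fin mulr_ge0// exprn_ge0.
rewrite (@eq_eseriesr _ _ (fun k => (geometric (q ^+ i) q k)%:E)); last first.
  by move=> k _ /=; rewrite leq_addl mul1r exprD mulrC.
apply: nneseries_EFin.
rewrite (_ : p = 1 - q)%R; last by rewrite /q; lra.
exact: cvg_geometric_series.
Qed.

Lemma fin_series k (c : R) : (0 <= c)%R ->
  \sum_(i <oo) (((i <= k)%N)%:R * c)%:E = (k.+1%:R * c)%:E.
Proof.
move=> c0; rewrite (nneseries_split 0 k.+1); last first.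
  by move=> j _; rewrite lee_fin mulr_ge0.
rewrite eseries0 ?adde0; last by move=> j; rewrite add0n => kj _; rewrite leqNgt kj mul0r.
rewrite add0n sumEFin big_nat_cond (eq_bigr (fun=> c)); last first.
  by move=> j /andP[/andP[_]]; rewrite ?add0n ltnS => -> _; rewrite mul1r.
by rewrite -big_nat_cond sumr_const_nat subn0 mulr_natl.
Qed.

Lemma S1 : \sum_(k <oo) (k.+1%:R * q ^+ k)%:E = ((p * p)^-1)%:E.
Proof.
rewrite (@eq_eseriesr _ _ (fun k => \sum_(i <oo) (((i <= k)%N)%:R * q ^+ k)%:E)); last first.
  by move=> k _; rewrite fin_series// exprn_ge0.
rewrite nneseries_interchange; last by move=> i j; rewrite lee_fin mulr_ge0// exprn_ge0.
rewrite (@eq_eseriesr _ _ (fun i => (geometric p^-1 q i)%:E)); last first.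
  by move=> i _; rewrite geo_tail /= mulrC.
apply: nneseries_EFin.
have p0 : (p != 0)%R by case/andP: hp => ? ?; apply/eqP; lra.
have -> : ((p * p)^-1 = p^-1 * (1 - q)^-1)%R.
  by rewrite /q (_ : (1 - (1 - p) = p)%R) ?invfM //; ring.
exact: cvg_geometric_series.
Qed.

Lemma sum_odd k : (\sum_(i < k.+1) (2 * i.+1))%N = (k.+1 * k.+2)%N.
Proof.
elim: k => [|k IH]; first by rewrite big_ord1.
rewrite big_ord_recr /= IH; lia.
Qed.

Lemma S2 : \sum_(k <oo) (k.+1%:R ^+ 2 * q ^+ k)%:E <= (2 / (p * p * p))%:E.
Proof.
apply: (@le_trans _ _ (\sum_(k <oo) \sum_(i <oo)
   (((i <= k)%N)%:R * (2 * i.+1%:R * q ^+ k))%:E)).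
  apply: lee_nneseries => [k _|k _]; first by rewrite lee_fin mulr_ge0// ?exprn_ge0.
  rewrite (nneseries_split 0 k.+1); last first.
    by move=> j _; rewrite lee_fin mulr_ge0// mulr_ge0// exprn_ge0.
  rewrite eseries0 ?adde0; last by move=> j; rewrite add0n => kj _; rewrite leqNgt kj mul0r.
  rewrite add0n sumEFin lee_fin big_nat_cond (eq_bigr (fun i => 2 * i.+1%:R * q ^+ k)%R); last first.
    by move=> j /andP[/andP[_]]; rewrite ?add0n ltnS => -> _; rewrite mul1r.
  rewrite -big_nat_cond -mulr_suml ler_wpM2r ?exprn_ge0//.
  rewrite big_mkord (eq_bigr (fun i : 'I_k.+1 => ((2 * i.+1)%N)%:R)); last first.
    by move=> i _; rewrite natrM.
  by rewrite -natr_sum sum_odd -natrX ler_nat; nia.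
have := @nneseries_interchange R (fun k i => (((i <= k)%N)%:R * (2 * i.+1%:R * q ^+ k))%:E) xpredT xpredT.
rewrite /= => ->; last by move=> i j; rewrite lee_fin mulr_ge0// mulr_ge0// exprn_ge0.
rewrite (@eq_eseriesr _ _ (fun i => (2 / p)%:E * (i.+1%:R * q ^+ i)%:E)); last first.
  move=> i _.
  rewrite (@eq_eseriesr _ _ (fun k => (2 * i.+1%:R)%:E * (((i <= k)%N)%:R * q ^+ k)%:E)); last first.
    by move=> k _; rewrite -EFinM; congr EFin; ring.
  rewrite nneseriesZl; last by move=> k _; rewrite lee_fin mulr_ge0// exprn_ge0.
  by rewrite geo_tail -EFinM -EFinM; congr EFin; ring.
rewrite nneseriesZl; last by move=> k _; rewrite lee_fin mulr_ge0// exprn_ge0.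
rewrite S1 -EFinM lee_fin.
have p0 : (p != 0)%R by case/andP: hp => ? ?; apply/eqP; lra.
rewrite invrM ?unitfE // ?mulf_neq0 //.
rewrite [X in (X <= _)%R](_ : _ = 2 / (p * p * p))%R //.
by field.
Qed.
End geo.

Lemma sum_cond_const {R : realType} n m (c : R) : (m <= n)%N ->
  \sum_(i < n | (i < m)%N) c = m%:R * c.
Proof.
move=> mn; rewrite (eq_bigl (fun i : 'I_n => true && (i < m)%N)) //.
by rewrite (big_ord_narrow_cond (P := xpredT) mn) sumr_const card_ord mulr_natl.
Qed.

Section expect.
Context {R : realType}.
Local Open Scope ereal_scope.
Variable p : R.
Hypothesis hp : (0 < p < 1)%R.
Let q := (1 - p)%R.

Definition W n (x : {ffun 'I_n -> nat}) : R := \prod_(i < n) geom_pmf p (x i).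
Arguments W {n}.
Definition Ex n (f : {ffun 'I_n -> nat} -> R) : \bar R :=
  \esum_(x in [set: {ffun 'I_n -> nat}]) (f x * W x)%:E.
Arguments Ex {n}.

Lemma pmf_ge0 k : (0 <= geom_pmf p k)%R.
Proof.
case: k => [|k] /=; first by [].
case/andP: hp => p0 p1; rewrite mulr_ge0 ?exprn_ge0//; [lra|lra].
Qed.

Lemma W_ge0 n x : (0 <= @W n x)%R.
Proof. by apply: prodr_ge0 => i _; exact: pmf_ge0. Qed.

Lemma shift_esum (f : nat -> R) : (forall k, 0 <= f k)%R ->
  \esum_(k in [set: nat]) (f k * geom_pmf p k)%:E =
  \sum_(k <oo) (p * (f k.+1 * q ^+ k))%:E.
Proof.
move=> f0; rewrite -nneseries_esumT; last by move=> k; rewrite lee_fin mulr_ge0// pmf_ge0.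
rewrite (nneseries_split 0 1); last by move=> k _; rewrite lee_fin mulr_ge0// pmf_ge0.
rewrite big_nat1 /= mulr0 add0e add0n -nneseries_addn; last first.
  by move=> k; rewrite lee_fin mulr_ge0// pmf_ge0.
apply: eq_eseriesr => k _; rewrite addn1 /=; congr EFin; rewrite /q; ring.
Qed.

Lemma mass1 : \esum_(k in [set: nat]) (1 * geom_pmf p k)%:E = 1.
Proof.
rewrite shift_esum //.
rewrite (@eq_eseriesr _ _ (fun k => p%:E * (((0 <= k)%N)%:R * q ^+ k)%:E)); last first.
  by move=> k _; rewrite -EFinM mul1r.
rewrite nneseriesZl; last by move=> k _; rewrite lee_fin mulr_ge0// exprn_ge0// /q; case/andP: hp => ? ?; lra.
rewrite geo_tail// expr0 -EFinM; congr EFin; field; case/andP: hp => ? ?; apply/eqP; lra.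
Qed.

Lemma Ex_prod n (f : 'I_n -> nat -> R) (s : 'I_n -> R) :
  (forall i k, 0 <= f i k)%R ->
  (forall i, \esum_(k in [set: nat]) (f i k * geom_pmf p k)%:E = (s i)%:E) ->
  Ex (fun x => (\prod_(i < n) f i (x i))%R) = (\prod_(i < n) s i)%:E.
Proof.
move=> f0 fs; rewrite /Ex /W.
rewrite (eq_esum (b := fun x : {ffun 'I_n -> nat} => (\prod_(i < n) (f i (x i) * geom_pmf p (x i)))%:E)); last by move=> x _; rewrite big_split.
apply: (@esum_prod R n (fun i k => f i k * geom_pmf p k)%R s) => // i k.
by rewrite mulr_ge0 ?pmf_ge0.
Qed.

Lemma prod_if1 n (i : 'I_n) (e : 'I_n -> R) :
  (\prod_(l < n) (if l == i then e l else 1) = e i)%R.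
Proof. by rewrite (bigD1 i) //= eqxx big1 ?mulr1 // => l /negPf ->. Qed.

Lemma prod_if2 n (i j : 'I_n) (e1 e2 : 'I_n -> R) : i != j ->
  (\prod_(l < n) (if l == i then e1 l else if l == j then e2 l else 1) = e1 i * e2 j)%R.
Proof.
move=> ij; rewrite (bigD1 i) //= eqxx (bigD1 j) /=; last by rewrite eq_sym.
rewrite eq_sym (negPf ij) eqxx big1 ?mulr1 //.
by move=> l /andP[/negPf -> /negPf ->].
Qed.

Lemma Ex1 n (i : 'I_n) (h : nat -> R) a : (forall k, 0 <= h k)%R ->
  \esum_(k in [set: nat]) (h k * geom_pmf p k)%:E = a%:E ->
  Ex (fun x => h (x i)) = a%:E.
Proof.
move=> h0 ha.
have := @Ex_prod n (fun l k => if l == i then h k else 1%R)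
   (fun l => if l == i then a else 1%R).
rewrite prod_if1 (_ : (fun x => _) = (fun x : {ffun 'I_n -> nat} => h (x i))); last first.
  by apply/funext => x; rewrite prod_if1.
apply.
  by move=> l k; case: ifP.
by move=> l; case: ifP => _ //; rewrite mass1.
Qed.

Lemma Ex2 n (i j : 'I_n) (h g : nat -> R) a b : i != j ->
  (forall k, 0 <= h k)%R -> (forall k, 0 <= g k)%R ->
  \esum_(k in [set: nat]) (h k * geom_pmf p k)%:E = a%:E ->
  \esum_(k in [set: nat]) (g k * geom_pmf p k)%:E = b%:E ->
  Ex (fun x => h (x i) * g (x j))%R = (a * b)%:E.
Proof.
move=> ij h0 g0 ha gb.
have := @Ex_prod n (fun l k => if l == i then h k else if l == j then g k else 1%R)
   (fun l => if l == i then a else if l == j then b else 1%R).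
rewrite prod_if2 // (_ : (fun x => _) = (fun x : {ffun 'I_n -> nat} => h (x i) * g (x j))%R); last first.
  by apply/funext => x; rewrite prod_if2.
apply.
  by move=> l k; case: ifP => _ //; case: ifP.
by move=> l; case: ifP => _ //; case: ifP => _ //; rewrite mass1.
Qed.

Lemma Ex_ge0 n (f : {ffun 'I_n -> nat} -> R) : (forall x, 0 <= f x)%R -> 0 <= Ex f.
Proof. by move=> f0; apply: esum_ge0 => x _; rewrite lee_fin mulr_ge0 ?W_ge0. Qed.

Lemma Ex_one n : Ex (fun _ : {ffun 'I_n -> nat} => 1%R) = 1.
Proof.
have := @Ex_prod n (fun _ _ => 1%R) (fun _ => 1%R).
rewrite big1 //.
by apply => // i; rewrite mass1.
Qed.

Lemma Ex_le n (f g : {ffun 'I_n -> nat} -> R) : (forall x, f x <= g x)%R -> Ex f <= Ex g.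
Proof. by move=> fg; apply: le_esum => x _; rewrite lee_fin ler_wpM2r ?W_ge0. Qed.

Lemma ExD n (f g : {ffun 'I_n -> nat} -> R) : (forall x, 0 <= f x)%R -> (forall x, 0 <= g x)%R ->
  Ex (fun x => f x + g x)%R = Ex f + Ex g.
Proof.
move=> f0 g0; rewrite /Ex -esumD; last 2 first.
- by move=> x _; rewrite lee_fin mulr_ge0 ?W_ge0.
- by move=> x _; rewrite lee_fin mulr_ge0 ?W_ge0.
by apply: eq_esum => x _; rewrite mulrDl EFinD.
Qed.

Lemma ExZ n (c : R) (f : {ffun 'I_n -> nat} -> R) : (0 <= c)%R -> (forall x, 0 <= f x)%R ->
  Ex (fun x => c * f x)%R = c%:E * Ex f.
Proof.
move=> c0 f0; rewrite /Ex -esumZl //; last by move=> x; rewrite lee_fin mulr_ge0 ?W_ge0.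
by apply: eq_esum => x _; rewrite -EFinM mulrA.
Qed.

Lemma Ex_sum n (I : seq 'I_n) (P : pred 'I_n) (F : 'I_n -> {ffun 'I_n -> nat} -> R) :
  (forall i x, 0 <= F i x)%R ->
  Ex (fun x => \sum_(i <- I | P i) F i x)%R = \sum_(i <- I | P i) Ex (F i).
Proof.
move=> F0; rewrite /Ex -esum_sum; last by move=> x i _ _; rewrite lee_fin mulr_ge0 ?W_ge0.
by apply: eq_esum => x _; rewrite mulr_suml sumEFin.
Qed.

Lemma geom_prob_Ex n (E : {ffun 'I_n -> nat} -> Prop) :
  geom_prob p n E = Ex (fun x => if `[< E x >] then 1 else 0)%R.
Proof.
rewrite /geom_prob esum_mkcond /Ex; apply: eq_esum => x _.
rewrite /W; case: (asboolP (E x)) => H.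
  by rewrite mul1r ifT // inE.
rewrite mul0r ifF //; apply/negbTE; apply/negP; rewrite in_setE; exact: H.
Qed.

End expect.
Arguments Ex {R} p {n} f.
Arguments W {R} p {n} x.
Arguments pmf_ge0 {R p}.
Arguments W_ge0 {R p}.
Arguments shift_esum {R p}.
Arguments mass1 {R p}.
Arguments Ex_prod {R p}.
Arguments Ex1 {R p}.
Arguments Ex2 {R p}.
Arguments Ex_ge0 {R p}.
Arguments Ex_one {R p}.
Arguments Ex_le {R p}.
Arguments ExD {R p}.
Arguments ExZ {R p}.
Arguments Ex_sum {R p}.
Arguments geom_prob_Ex {R p}.


Section cheb.
Context {R : realType}.
Variable p : R.
Hypothesis hp : (0 < p < 1)%R.

Lemma cheb n m (h : nat -> R) (a b t : R) : (m <= n)%N -> (forall k, 0 <= h k) -> 0 < t ->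
  (\esum_(k in [set: nat]) (h k * geom_pmf p k)%:E = a%:E)%E ->
  (\esum_(k in [set: nat]) (h k ^+ 2 * geom_pmf p k)%:E <= b%:E)%E ->
  (geom_prob p n (fun x => (t <= `| \sum_(i < n | (i < m)%N) h (x i) - m%:R * a |)%R)
   <= (m%:R * (b - a ^+ 2) / t ^+ 2)%:E)%E.
Proof.
move=> mn h0 t0 ha hb.
have a0 : 0 <= a by rewrite -lee_fin -ha esum_ge0 // => k _; rewrite lee_fin mulr_ge0 ?pmf_ge0.
have h2ge0 : (0 <= \esum_(k in [set: nat]) (h k ^+ 2 * geom_pmf p k)%:E)%E.
  by rewrite esum_ge0 // => k _; rewrite lee_fin mulr_ge0 ?pmf_ge0 ?exprn_ge0.
set b' := fine (\esum_(k in [set: nat]) (h k ^+ 2 * geom_pmf p k)%:E).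
have hb' : (\esum_(k in [set: nat]) (h k ^+ 2 * geom_pmf p k)%:E = b'%:E)%E.
  rewrite /b' fineK // ge0_fin_numE //; exact: le_lt_trans hb (ltry _).
have b'b : b' <= b by rewrite -lee_fin -hb'.
set S := fun x : {ffun 'I_n -> nat} => \sum_(i < n | (i < m)%N) h (x i).
have S0 x : 0 <= S x by apply: sumr_ge0.
have ES : Ex p (fun x => S x) = (m%:R * a)%:E.
  rewrite /S (Ex_sum hp) //.
  rewrite (eq_bigr (fun=> a%:E)); last by move=> i _; rewrite (Ex1 hp _ _ _ _ h0 ha).
  by rewrite sumEFin sum_cond_const.
have ES2 : Ex p (fun x => S x ^+ 2) = (m%:R * (m%:R * a ^+ 2 + b' - a ^+ 2))%:E.
  rewrite (_ : (fun x => S x ^+ 2) = (fun x => \sum_(i < n | (i < m)%N)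
        \sum_(j < n | (j < m)%N) h (x i) * h (x j))); last first.
    by apply/funext => x; rewrite /S expr2 mulr_suml; apply: eq_bigr => i _; rewrite mulr_sumr.
  rewrite (Ex_sum hp); last by move=> i x; apply: sumr_ge0 => j _; rewrite mulr_ge0.
  rewrite (eq_bigr (fun=> (m%:R * a ^+ 2 + b' - a ^+ 2)%:E)); last first.
    move=> i im; rewrite (Ex_sum hp); last by move=> j x; rewrite mulr_ge0.
    rewrite (eq_bigr (fun j : 'I_n => (a ^+ 2 + (j == i)%:R * (b' - a ^+ 2))%:E)); last first.
      move=> j _; case: eqVneq => [->|ji].
        rewrite (_ : a ^+ 2 + 1 * (b' - a ^+ 2) = b'); last by ring.
        rewrite -(Ex1 hp _ i (fun k => h k ^+ 2) _ (fun k => exprn_ge0 _ (h0 k)) hb').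
        by rewrite /Ex; apply: eq_esum => x _; rewrite expr2.
      rewrite (Ex2 hp _ _ _ _ _ _ _ _ h0 h0 ha ha) 1?eq_sym //.
      by rewrite mul0r addr0 expr2.
    rewrite sumEFin big_split /= sum_cond_const //.
    rewrite (bigD1 i) //= eqxx mul1r big1 ?addr0; last by move=> j /andP[_ /negPf ->]; rewrite mul0r.
    by rewrite addrA.
  by rewrite sumEFin sum_cond_const.
rewrite geom_prob_Ex.
set I := fun x => if `[< _ >] then _ else _.
have I0 x : 0 <= I x by rewrite /I; case: asboolP.
have I1 x : I x <= 1 by rewrite /I; case: asboolP.
have key : (Ex p (fun x => (t ^+ 2 * I x + (2 * (m%:R * a)) * S x)%R)
           <= Ex p (fun x => (S x ^+ 2 + (m%:R * a) ^+ 2 * 1)%R))%E.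
  apply: (Ex_le hp) => x; rewrite /I; set mu := m%:R * a; case: asboolP => H0.
    have H : t <= `|S x - mu| by exact: H0.
    move: (S x) H => Sx H.
    have T : t * t <= `|Sx - mu| * `|Sx - mu| := ler_pM (ltW t0) (ltW t0) H H.
    have E : `|Sx - mu| ^+ 2 = (Sx - mu) ^+ 2 by rewrite real_normK // num_real.
    rewrite -!expr2 E in T.
    nra.
  move: (S x) => Sx; have := sqr_ge0 (Sx - mu); nra.
rewrite (ExD hp) in key; last 2 first.
- by move=> x; rewrite mulr_ge0 // exprn_ge0 // ltW.
- by move=> x; rewrite mulr_ge0 // mulr_ge0 // mulr_ge0.
rewrite (ExD hp) in key; last 2 first.
- by move=> x; rewrite exprn_ge0.
- by move=> x; rewrite mulr1 exprn_ge0 // mulr_ge0.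
rewrite (ExZ hp) in key; last 2 first.
- by rewrite exprn_ge0 // ltW.
- exact: I0.
rewrite (ExZ hp) in key; last 2 first.
- by rewrite mulr_ge0 // mulr_ge0.
- exact: S0.
rewrite (ExZ hp) in key; last 2 first.
- by rewrite exprn_ge0 // mulr_ge0.
- by [].
rewrite (Ex_one hp n) ES ES2 in key.
have PI1 : (Ex p I <= 1)%E by rewrite -(Ex_one hp n); apply: (Ex_le hp).
have PI0 : (0 <= Ex p I)%E by apply: (Ex_ge0 hp).
have PIf : Ex p I = (fine (Ex p I))%:E.
  by rewrite fineK // ge0_fin_numE // (le_lt_trans PI1) // ltry.
rewrite PIf -!EFinM -!EFinD !lee_fin in key *.
have t2 : 0 < t ^+ 2 by rewrite exprn_gt0.
rewrite ler_pdivlMr //.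
have : 0 <= m%:R :> R by [].
nra.
Qed.
End cheb.


Lemma sum_mono n (F : 'I_n -> nat) k1 k2 : (k1 <= k2)%N ->
  (\sum_(i < n | (i < k1)%N) F i <= \sum_(i < n | (i < k2)%N) F i)%N.
Proof.
move=> k12; rewrite [X in (X <= _)%N]big_mkcond [X in (_ <= X)%N]big_mkcond /=.
apply: leq_sum => i _; case: ifP => // ik1.
by rewrite ifT // (leq_trans ik1).
Qed.

Lemma K1 n (x : {ffun 'I_n -> nat}) m : (0 < m)%N -> (m <= n)%N -> (m < Ktear x)%N ->
  (\sum_(i < n | (i < m)%N) x i < n)%N.
Proof.
move=> m0 mn; rewrite /Ktear ltnS => mf.
have := @before_find _ 0%N (fun k => n <= \sum_(i < n | (i < k)%N) x i)%N (iota 1 n) m.-1.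
rewrite nth_iota; last by lia.
rewrite add1n prednK // => H; by rewrite ltnNge H.
Qed.

Lemma K2 n (x : {ffun 'I_n -> nat}) m : (m <= n)%N -> (Ktear x < m)%N ->
  (n <= \sum_(i < n | (i < m)%N) x i)%N.
Proof.
move=> mn; rewrite /Ktear => fm.
set P := (fun k => n <= \sum_(i < n | (i < k)%N) x i)%N in fm *.
have hs : has P (iota 1 n) by rewrite has_find size_iota; lia.
have := nth_find 0%N hs; rewrite nth_iota; last by move: hs; rewrite has_find size_iota.
rewrite add1n => H; apply: (leq_trans H); apply: sum_mono; lia.
Qed.

Lemma Y1 {R : realType} (gamma : R) n (x : {ffun 'I_n -> nat}) m : (Ktear x <= m)%N ->
  (Ygamma gamma x <= \sum_(i < n | (i < m)%N) nat_of_bool (long_frag gamma n (x i)))%N.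
Proof. by move=> Km; apply: sum_mono. Qed.

Lemma Y2 {R : realType} (gamma : R) n (x : {ffun 'I_n -> nat}) m : (m <= Ktear x)%N ->
  (\sum_(i < n | (i < m)%N) nat_of_bool (long_frag gamma n (x i)) <= Ygamma gamma x)%N.
Proof. by move=> Km; apply: sum_mono. Qed.


Section inst.
Context {R : realType}.
Variable p : R.
Hypothesis hp : (0 < p < 1)%R.
Let q := 1 - p.
Let p0 : p != 0. Proof. by case/andP: hp => ? ?; apply/eqP; lra. Qed.

Lemma EN : (\esum_(k in [set: nat]) (k%:R * geom_pmf p k)%:E = (p^-1)%:E)%E.
Proof.
rewrite (shift_esum hp) //.
rewrite (@eq_eseriesr _ _ (fun k => p%:E * (k.+1%:R * q ^+ k)%:E)%E) //.
rewrite nneseriesZl; last by move=> k _; rewrite lee_fin mulr_ge0// exprn_ge0// /q; case/andP: hp => ? ?; lra.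
rewrite (S1 p hp) -EFinM; congr EFin; by field.
Qed.

Lemma EN2 : (\esum_(k in [set: nat]) (k%:R ^+ 2 * geom_pmf p k)%:E <= (2 / (p * p))%:E)%E.
Proof.
rewrite (shift_esum hp) //.
rewrite (@eq_eseriesr _ _ (fun k => p%:E * (k.+1%:R ^+ 2 * q ^+ k)%:E)%E) //.
rewrite nneseriesZl; last by move=> k _; rewrite lee_fin mulr_ge0// ?exprn_ge0// /q; case/andP: hp => ? ?; lra.
apply: le_trans; first by apply: lee_wpmul2l; [rewrite lee_fin; case/andP: hp => ? ?; lra| exact: (S2 p hp)].
rewrite -EFinM lee_fin (_ : p * (2 / (p * p * p)) = 2 / (p * p)) //; by field.
Qed.

Lemma EL j : (0 < j)%N ->
  (\esum_(k in [set: nat]) (((j <= k)%N)%:R * geom_pmf p k)%:E = (q ^+ j.-1)%:E)%E.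
Proof.
move=> j0; rewrite (shift_esum hp) //.
rewrite (@eq_eseriesr _ _ (fun k => p%:E * (((j.-1 <= k)%N)%:R * q ^+ k)%:E)%E); last first.
  move=> k _; rewrite -EFinM /= (_ : (j <= k.+1)%N = (j.-1 <= k)%N) //.
  by rewrite -(prednK j0) ltnS; case: j j0.
rewrite nneseriesZl; last by move=> k _; rewrite lee_fin mulr_ge0// exprn_ge0// /q; case/andP: hp => ? ?; lra.
by rewrite (geo_tail p hp) -EFinM; congr EFin; field.
Qed.

Lemma EL2 j : (0 < j)%N ->
  (\esum_(k in [set: nat]) (((j <= k)%N)%:R ^+ 2 * geom_pmf p k)%:E <= (q ^+ j.-1)%:E)%E.
Proof.
move=> j0; rewrite -(EL _ j0) le_eqVlt; apply/orP; left; apply/eqP; apply: eq_esum => k _.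
by case: (j <= k)%N; rewrite ?expr1n ?expr0n.
Qed.
End inst.


Section P7.
Context {R : realType}.
Variable p : R.
Hypothesis hp : (0 < p < 1)%R.
Let p0 : p != 0. Proof. by case/andP: hp => ? ?; apply/eqP; lra. Qed.

Lemma chebN n m (t : R) : (m <= n)%N -> 0 < t ->
  (geom_prob p n (fun x => (t <= `|\sum_(i < n | (i < m)%N) (x i)%:R - m%:R * p^-1|)%R)
   <= (m%:R / (p ^+ 2 * t ^+ 2))%:E)%E.
Proof.
move=> mn t0.
have := @cheb R p hp n m (fun k => k%:R) (p^-1) (2 / (p * p)) t mn (fun k => ler0n _ _) t0 (EN p hp) (EN2 p hp).
move/le_trans; apply; rewrite lee_fin le_eqVlt; apply/orP; left; apply/eqP.
by field; rewrite p0 gt_eqF.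
Qed.

Lemma chebL n m j (t : R) : (0 < j)%N -> (m <= n)%N -> 0 < t ->
  (geom_prob p n (fun x => (t <= `|\sum_(i < n | (i < m)%N) ((j <= x i)%N)%:R - m%:R * (1 - p) ^+ j.-1|)%R)
   <= (m%:R / t ^+ 2)%:E)%E.
Proof.
move=> j0 mn t0.
have := @cheb R p hp n m (fun k => ((j <= k)%N)%:R) ((1 - p) ^+ j.-1) ((1 - p) ^+ j.-1) t mn (fun k => ler0n _ _) t0 (EL p hp _ j0) (EL2 p hp _ j0).
move/le_trans; apply; rewrite lee_fin.
have r0 : 0 <= (1 - p) ^+ j.-1 by rewrite exprn_ge0 //; case/andP: hp => ? ?; lra.
have r1 : (1 - p) ^+ j.-1 <= 1 by rewrite exprn_ile1 //; case/andP: hp => ? ?; lra.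
rewrite ler_pM2r ?invr_gt0 ?exprn_gt0 // ler_piMr //; nra.
Qed.

Lemma gp_mono n (E1 E2 : {ffun 'I_n -> nat} -> Prop) : (forall x, E1 x -> E2 x) ->
  (geom_prob p n E1 <= geom_prob p n E2)%E.
Proof.
move=> E12; rewrite !geom_prob_Ex; apply: (Ex_le hp) => x.
case: asboolP => H1; case: asboolP => H2 //; exfalso; exact: H2 (E12 _ H1).
Qed.

Lemma gp_union4 n (E E1 E2 E3 E4 : {ffun 'I_n -> nat} -> Prop) :
  (forall x, E x -> [\/ E1 x, E2 x, E3 x | E4 x]) ->
  (geom_prob p n E <= geom_prob p n E1 + geom_prob p n E2 + geom_prob p n E3 + geom_prob p n E4)%E.
Proof.
move=> HE; rewrite !geom_prob_Ex.
set I := fun (F : {ffun 'I_n -> nat} -> Prop) x => if `[< F x >] then 1 else 0 : R.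
have I0 F x : 0 <= I F x by rewrite /I; case: asboolP.
have key : forall x, I E x <= I E1 x + I E2 x + I E3 x + I E4 x.
  move=> x; rewrite {1}/I; case: asboolP => H; last by rewrite !addr_ge0.
  have h1 := I0 E1 x; have h2 := I0 E2 x; have h3 := I0 E3 x; have h4 := I0 E4 x.
  rewrite /I in h1 h2 h3 h4 *.
  by case: (HE x H) => H'; rewrite (asboolT H'); lra.
apply: (le_trans (Ex_le hp _ _ _ key)).
rewrite !(ExD hp); (try by move=> x; rewrite ?addr_ge0).
by [].
Qed.
End P7.


Lemma arith_a {R : realType} (A r m1 beta eps delta : R) :
  0 <= r -> r <= (1 + delta) * beta -> 0 <= m1 -> m1 <= (1 + delta) * A + 1 ->
  0 < beta -> beta <= 1 -> 0 < delta -> delta <= eps / 12 -> delta <= 1/2 ->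
  8 <= eps * A -> 2 <= A -> m1 * r <= beta * A + eps * A / 2.
Proof.
move=> r0 rhi m0 mhi b0 b1 d0 de d12 eA A2.
have h0 : m1 * r <= ((1 + delta) * A + 1) * ((1 + delta) * beta) by apply: ler_pM.
apply: (le_trans h0).
have h1 : beta * A * delta * delta <= beta * A * delta / 2.
  have : 0 <= beta * A * delta by rewrite !mulr_ge0 //; lra.
  nra.
have h2 : beta * A * delta <= A * delta.
  have : 0 <= A * delta by rewrite mulr_ge0 //; lra.
  nra.
have h3 : A * delta <= eps * A / 12 by nra.
have h4 : beta * delta <= beta / 2 by nra.
nra.
Qed.

Lemma arith_b {R : realType} (A r m2 beta eps delta : R) :
  (1 - delta) * beta <= r -> (1 - delta) * A - 1 <= m2 ->
  0 < beta -> beta <= 1 -> 0 < delta -> delta <= eps / 12 -> delta <= 1/2 ->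
  8 <= eps * A -> 2 <= A -> beta * A - eps * A / 2 <= m2 * r.
Proof.
move=> rlo mlo b0 b1 d0 de d12 eA A2.
have h0 : ((1 - delta) * A - 1) * ((1 - delta) * beta) <= m2 * r.
  apply: ler_pM => //; nra.
apply: le_trans h0.
have h2 : beta * A * delta <= A * delta.
  have : 0 <= A * delta by rewrite mulr_ge0 //; lra.
  nra.
have h3 : A * delta <= eps * A / 12 by nra.
have h5 : 0 <= beta * A * delta * delta by rewrite !mulr_ge0 //; lra.
nra.
Qed.

Lemma main_n {R : realType} (n : nat) (p gamma eps beta delta : R) (j : nat) :
  0 < p < 1 -> 0 < eps -> 0 < beta -> beta <= 1 -> 0 < delta -> delta <= eps / 12 ->
  delta <= 1/2 -> (0 < j)%N ->
  (forall k, long_frag gamma n k = (j <= k)%N) ->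
  2 <= n%:R * p -> 8 / eps <= n%:R * p -> 3 * (n%:R * p) <= n%:R ->
  `|(1 - p) ^+ j.-1 - beta| <= delta * beta ->
  (geom_prob p n (fun x => (eps * n%:R * p < `|(Ygamma gamma x)%:R - beta * n%:R * p|)%R)
    <= ((4 / delta ^+ 2 + 16 / eps ^+ 2) / (n%:R * p))%:E)%E.
Proof.
move=> hp e0 b0 b1 d0 de d12 j0 hlong A2 A8 A3 hr.
have p0 : 0 < p by case/andP: hp.
have p1 : p < 1 by case/andP: hp.
have pn0 : p != 0 by rewrite gt_eqF.
set A := n%:R * p in A2 A8 A3 *.
have eA : 8 <= eps * A by have := ler_wpM2l (ltW e0) A8; rewrite mulrC divfK ?gt_eqF.
have nA : n%:R = A * p^-1 by rewrite /A mulrK // unitfE.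
set r := (1 - p) ^+ j.-1 in hr *.
have r0 : 0 <= r by rewrite exprn_ge0 //; lra.
have /andP[rlo rhi] : (- (delta * beta) <= r - beta <= delta * beta) by rewrite -ler_norml.
have rlo' : (1 - delta) * beta <= r by lra.
have rhi' : r <= (1 + delta) * beta by lra.
have A0 : 0 <= A by lra.
set m1 := (Num.trunc ((1 + delta) * A)).+1.
set m2 := Num.trunc ((1 - delta) * A).
have /andP[t1a t1b] : (Num.trunc ((1 + delta) * A))%:R <= (1 + delta) * A < m1%:R.
  by apply: truncn_itv; rewrite mulr_ge0 //; lra.
have /andP[t2a t2b] : m2%:R <= (1 - delta) * A < m2.+1%:R.
  by apply: truncn_itv; rewrite mulr_ge0 //; lra.
have m1hi : m1%:R <= (1 + delta) * A + 1.
  by rewrite /m1 -natr1 lerD2r.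
have m2lo : (1 - delta) * A - 1 <= m2%:R by move: t2b; rewrite -natr1 -ltrBlDr => /ltW.
have dA : delta * A <= A / 2 by nra.
have dA0 : 0 <= delta * A by rewrite mulr_ge0 //; lra.
have m1n : (m1 <= n)%N by rewrite -(ler_nat R); lra.
have m2n : (m2 <= n)%N by rewrite -(ler_nat R); lra.
have m1p : (1 + delta) * n%:R < m1%:R * p^-1.
  by rewrite nA mulrA ltr_pM2r // invr_gt0.
have m2p : m2%:R * p^-1 <= (1 - delta) * n%:R.
  by rewrite nA mulrA ler_pM2r // invr_gt0.
apply: le_trans.
  apply: (@gp_union4 R p hp n _
   (fun x => (delta * n%:R <= `|\sum_(i < n | (i < m1)%N) (x i)%:R - m1%:R * p^-1|)%R)
   (fun x => (delta * n%:R <= `|\sum_(i < n | (i < m2)%N) (x i)%:R - m2%:R * p^-1|)%R)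
   (fun x => (eps * A / 2 <= `|\sum_(i < n | (i < m1)%N) ((j <= x i)%N)%:R - m1%:R * r|)%R)
   (fun x => (eps * A / 2 <= `|\sum_(i < n | (i < m2)%N) ((j <= x i)%N)%:R - m2%:R * r|)%R)).
  move=> x H.
  have hL m : \sum_(i < n | (i < m)%N) ((nat_of_bool (long_frag gamma n (x i)))%:R : R)
            = \sum_(i < n | (i < m)%N) ((j <= x i)%N)%:R.
    by apply: eq_bigr => i _; rewrite hlong.
  have hY1 : (Ktear x <= m1)%N -> (Ygamma gamma x)%:R <= \sum_(i < n | (i < m1)%N) ((j <= x i)%N)%:R :> R.
    by move=> Km; rewrite -hL -natr_sum ler_nat; apply: Y1.
  have hY2 : (m2 <= Ktear x)%N -> \sum_(i < n | (i < m2)%N) ((j <= x i)%N)%:R <= (Ygamma gamma x)%:R :> R.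
    by move=> Km; rewrite -hL -natr_sum ler_nat; apply: Y2.
  have hN1 : (m1 < Ktear x)%N -> \sum_(i < n | (i < m1)%N) (x i)%:R < n%:R :> R.
    by move=> Km; rewrite -natr_sum ltr_nat; apply: K1.
  have hN2 : (Ktear x < m2)%N -> n%:R <= \sum_(i < n | (i < m2)%N) (x i)%:R :> R.
    by move=> Km; rewrite -natr_sum ler_nat; apply: K2.
  have ma := @arith_a R A r m1%:R beta eps delta r0 rhi' (ler0n _ m1) m1hi b0 b1 d0 de d12 eA A2.
  have mb := @arith_b R A r m2%:R beta eps delta rlo' m2lo b0 b1 d0 de d12 eA A2.
  move: H; rewrite (_ : eps * n%:R * p = eps * A); last by rewrite /A mulrA.
  rewrite (_ : beta * n%:R * p = beta * A); last by rewrite /A mulrA.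
  rewrite ltr_normr => /orP[] H.
  - case: (ltnP m1 (Ktear x)) => hK.
    + apply: Or41; have := hN1 hK; rewrite ler_normr => hs; apply/orP; right; lra.
    + apply: Or43; have := hY1 hK; rewrite ler_normr => hs; apply/orP; left; lra.
  - case: (ltnP (Ktear x) m2) => hK.
    + apply: Or42; have := hN2 hK; rewrite ler_normr => hs; apply/orP; left; lra.
    + apply: Or44; have := hY2 hK; rewrite ler_normr => hs; apply/orP; right; lra.
have n0 : 0 < n%:R :> R by lra.
have t1 : 0 < delta * n%:R by rewrite mulr_gt0.
have t3 : 0 < eps * A / 2 by rewrite divr_gt0 // mulr_gt0 //; lra.
apply: le_trans.
  apply: leeD; [apply: leeD; [apply: leeD|]|].
  - exact: (chebN p hp n m1 (delta * n%:R) m1n t1).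
  - exact: (chebN p hp n m2 (delta * n%:R) m2n t1).
  - exact: (chebL p hp n m1 j (eps * A / 2) j0 m1n t3).
  - exact: (chebL p hp n m2 j (eps * A / 2) j0 m2n t3).
rewrite -!EFinD lee_fin.
have Apos : 0 < A by lra.
set u := 1 / (delta ^+ 2 * A ^+ 2).
set v := 4 / (eps ^+ 2 * A ^+ 2).
have u0 : 0 <= u by rewrite divr_ge0 // mulr_ge0 // exprn_ge0 //; lra.
have v0 : 0 <= v by rewrite divr_ge0 // mulr_ge0 // exprn_ge0 //; lra.
have e1 m : m%:R / (p ^+ 2 * (delta * n%:R) ^+ 2) = m%:R * u.
  rewrite /u nA; field; rewrite ?pn0 ?gt_eqF //.
have e3 m : m%:R / (eps * A / 2) ^+ 2 = m%:R * v.
  rewrite /v; field; rewrite ?gt_eqF //.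
rewrite !e1 !e3.
have -> : (4 / delta ^+ 2 + 16 / eps ^+ 2) / A = (4 * A) * (u + v).
  rewrite /u /v; field; rewrite ?gt_eqF //.
have hm : m1%:R + m2%:R <= 4 * A :> R by lra.
have := ler_wpM2r (addr_ge0 u0 v0) hm.
lra.
Qed.


Lemma r_bound {R : realType} (p c L delta : R) (d : nat) : 0 < p < 1 -> 0 < delta ->
  d%:R <= c -> c <= d%:R + 1 ->
  - (p * c) + p <= L + ln (1 + delta) -> L - ln (1 + delta) <= - (p * c) / (1 - p) ->
  `|(1 - p) ^+ d - expR L| <= delta * expR L.
Proof.
move=> /andP[p0 p1] d0 dc cd h1 h2.
have q0 : 0 < 1 - p by lra.
have eL : 0 < expR L by apply: expR_gt0.
have e1 : expR (L + ln (1 + delta)) = expR L * (1 + delta) by rewrite expRD lnK // posrE; lra.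
have e2 : expR (L - ln (1 + delta)) = expR L / (1 + delta) by rewrite expRB lnK // posrE; lra.
have up : (1 - p) ^+ d <= expR L * (1 + delta).
  have s1 : (1 - p) ^+ d <= expR (- p) ^+ d.
    apply: lerXn2r; rewrite ?nnegrE ?expR_ge0 //; first lra.
    by have := expR_ge1Dx (- p); lra.
  apply: (le_trans s1); rewrite -expRM_natr -e1 ler_expR.
  apply: le_trans h1; nra.
have lo : expR L / (1 + delta) <= (1 - p) ^+ d.
  have s1 : expR (- (p / (1 - p))) ^+ d <= (1 - p) ^+ d.
    apply: lerXn2r; rewrite ?nnegrE ?expR_ge0 //; first lra.
    rewrite expRN -[X in _ <= X]invrK lef_pV2 ?posrE ?expR_gt0 ?invr_gt0 //.
    have := expR_ge1Dx (p / (1 - p)).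
    rewrite (_ : 1 + p / (1 - p) = (1 - p)^-1) //; field; lra.
  apply: le_trans s1; rewrite -expRM_natr -e2 ler_expR.
  apply: (le_trans h2).
  have k0 : 0 <= p / (1 - p) by rewrite divr_ge0 //; lra.
  rewrite (_ : - (p * c) / (1 - p) = - (p / (1 - p)) * c); last by field; lra.
  nra.
rewrite ler_norml; apply/andP; split.
  have : expR L * (1 - delta) <= expR L / (1 + delta).
    rewrite ler_pM2l // -[X in _ <= X]mul1r ler_pdivlMr; last lra.
    nra.
  lra.
nra.
Qed.


Lemma ceil_nat {R : realType} (c : R) : 0 < c -> exists j,
  [/\ (0 < j)%N, (forall k, (c <= k%:R) = (j <= k)%N), (j.-1)%:R <= c & c <= (j.-1)%:R + 1].
Proof.
move=> c0.
have ex : exists k, c <= k%:R.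
  exists (Num.trunc c).+1; apply: ltW.
  by have /andP[_ ->] := truncn_itv (ltW c0).
case: (ex_minnP ex) => j Pj minj.
have j0 : (0 < j)%N by case: j Pj minj => // ?; lra.
have Pd : (j.-1)%:R < c.
  rewrite ltNge; apply/negP => H; have := minj _ H; lia.
exists j; split => //.
- move=> k; apply/idP/idP => [/minj //|jk].
  by apply: (le_trans Pj); rewrite ler_nat.
- exact: ltW.
- by rewrite natr1 prednK.
Qed.

Lemma ln_ev {R : realType} (M : R) : exists N, forall n, (N <= n)%N ->
  M <= ln (n%:R : R) /\ (2 <= n)%N.
Proof.
have [N _ HN] := nbhs_infty_ger (expR M).
exists (maxn N 2) => n Nn; split; last by lia.
have h : expR M <= n%:R by apply: HN => /=; lia.
rewrite -[X in X <= _]expRK ler_ln ?posrE ?expR_gt0 //.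
exact: lt_le_trans (expR_gt0 M) h.
Qed.

Lemma pn_facts {R : realType} (n : nat) (pn a : R) : (2 <= n)%N -> 0 < a -> 0 < pn ->
  a / 2 <= pn * log2 (n%:R : R) -> pn * log2 (n%:R : R) <= 2 * a ->
  a * ln 2 / 4 * ln (n%:R : R) <= n%:R * pn /\ pn <= 2 * a * ln 2 / ln (n%:R : R).
Proof.
move=> n2 a0 p0 h1 h2.
have L0 : 0 < ln (n%:R : R) by apply: ln_gt0; rewrite ltr1n.
have l20 : 0 < ln (2 : R) by apply: ln_gt0; lra.
move: h1 h2; rewrite /log2.
set L := ln (n%:R : R) in L0 *; set l2 := ln (2 : R) in l20 *.
move=> h1 h2.
have hn : L ^+ 2 / 2 <= n%:R.
  have := expR_ge1Dxn 1 (ltW L0); rewrite lnK ?posrE ?ltr0n; last lia.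
  rewrite (_ : (1 + 1)`!%:R = 2 :> R) //; lra.
set v := pn * (L / l2) in h1 h2.
have pE : pn = v * l2 / L by rewrite /v; field; rewrite !gt_eqF.
have v0 : 0 <= a / 2 by lra.
have hv : L ^+ 2 / 2 * (a / 2) <= n%:R * v.
  by apply: ler_pM => //; rewrite ?divr_ge0 ?exprn_ge0 //; lra.
split.
- rewrite pE mulrA ler_pdivlMr //.
  have := ler_wpM2r (ltW l20) hv.
  rewrite (_ : L ^+ 2 / 2 * (a / 2) * l2 = a * l2 / 4 * L * L); last by field.
  by rewrite mulrA.
- rewrite pE ler_pM2r ?invr_gt0 //; nra.
Qed.


Lemma inv_mono {R : realType} (c X L : R) : 0 <= c -> 0 < X -> X <= L -> c / L <= c / X.
Proof.
move=> c0 X0 XL; apply: ler_wpM2l => //.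
by rewrite lef_pV2 ?posrE //; exact: lt_le_trans XL.
Qed.

Ltac nz := repeat (apply/andP; split); apply: lt0r_neq0; rewrite ?mulr_gt0 //; lra.

Theorem lemma4 (R : realType) (p : nat -> R) (alpha gamma eps : R)
  (hp : forall n, 0 < p n < 1)
  (halpha : (fun n => p n * log2 (n%:R : R)) @ \oo --> alpha)
  (halpha0 : 0 < alpha)
  (hgamma : 0 < gamma) (heps : 0 < eps) :
  (fun n => geom_prob (p n) n
     (fun x => eps * n%:R * p n <
               `| (Ygamma gamma x)%:R - expR (- (alpha * gamma)) * n%:R * p n |))
    @ \oo --> 0%E.
Proof.
set beta := expR (- (alpha * gamma)).
have b0 : 0 < beta by apply: expR_gt0.
have b1 : beta <= 1.
  rewrite /beta -expR0 ler_expR oppr_le0; apply: mulr_ge0; lra.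
set delta := eps / (12 + 2 * eps).
have d0 : 0 < delta by rewrite divr_gt0 //; lra.
have dE : delta * (12 + 2 * eps) = eps by rewrite /delta divfK // gt_eqF //; lra.
have de : delta <= eps / 12 by rewrite ler_pdivlMr //; nra.
have d12 : delta <= 1 / 2 by nra.
set eta := ln (1 + delta).
have eta0 : 0 < eta by apply: ln_gt0; lra.
set C := 4 / delta ^+ 2 + 16 / eps ^+ 2.
have C0 : 0 < C by rewrite addr_gt0 // divr_gt0 // exprn_gt0.
set l2 := ln (2 : R).
have l20 : 0 < l2 by apply: ln_gt0; lra.
have al0 : 0 < alpha * l2 by rewrite mulr_gt0.
move/cvgrPdist_le: halpha => hal.
have key : forall M : R, exists N, forall n, (N <= n)%N ->
   M <= n%:R * p n /\
   (geom_prob (p n) n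
     (fun x => (eps * n%:R * p n <
               `| (Ygamma gamma x)%:R - beta * n%:R * p n |)%R) <= (C / (n%:R * p n))%:E)%E.
  move=> M.
  have [N1 _ H1] := hal (alpha / 2) ltac:(lra).
  have [N2 _ H2] := hal (eta / (2 * gamma)) ltac:(rewrite divr_gt0 //; lra).
  set t1 := 4 * 2 / (alpha * l2).
  set t2 := 4 * (8 / eps) / (alpha * l2).
  set t3 := 4 * `|M| / (alpha * l2).
  set t4 := 6 * alpha * l2.
  set t5 := 4 * alpha * l2 / eta.
  set t6 := 4 * alpha * l2 * (alpha * gamma + eta) / eta.
  have t10 : 0 < t1 by rewrite divr_gt0.
  have t20 : 0 < t2 by rewrite divr_gt0 // mulr_gt0 // divr_gt0.
  have t30 : 0 <= t3 by rewrite divr_ge0 // ?mulr_ge0 // ltW.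
  have t40 : 0 < t4 by rewrite !mulr_gt0.
  have t50 : 0 < t5 by rewrite divr_gt0 // !mulr_gt0.
  have ag0 : 0 < alpha * gamma by rewrite mulr_gt0.
  have t60 : 0 < t6 by rewrite divr_gt0 // !mulr_gt0 //; lra.
  have [N3 H3] := ln_ev (t1 + t2 + t3 + t4 + t5 + t6).
  exists (maxn N1 (maxn N2 N3)) => n Nn.
  have [lnM n2] : _ /\ _ := H3 n (leq_trans (leq_maxr _ _) (leq_trans (leq_maxr _ _) Nn)).
  have u1 := H1 n (leq_trans (leq_maxl _ _) Nn).
  have u2 := H2 n (leq_trans (leq_maxl _ _) (leq_trans (leq_maxr _ _) Nn)).
  move: u1 u2; set u := p n * log2 (n%:R : R) => u1 u2.
  have [p0 p1] : 0 < p n /\ p n < 1 by case/andP: (hp n).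
  move: u1; rewrite ler_norml => /andP[u1a u1b].
  have uA1 : alpha / 2 <= u by lra.
  have uA2 : u <= 2 * alpha by lra.
  have [Alow pup] := @pn_facts R n (p n) alpha n2 halpha0 p0 uA1 uA2.
  rewrite -/l2 in Alow pup.
  set L := ln (n%:R : R) in lnM Alow pup *.
  have L0 : 0 < L by apply: ln_gt0; rewrite ltr1n.
  have Lt1 : t1 <= L by lra.
  have Lt2 : t2 <= L by lra.
  have Lt3 : t3 <= L by lra.
  have Lt4 : t4 <= L by lra.
  have Lt5 : t5 <= L by lra.
  have Lt6 : t6 <= L by lra.
  have AX : forall X, 4 * X / (alpha * l2) <= L -> X <= n%:R * p n.
    move=> X hX; apply: le_trans Alow.
    rewrite [X in X <= _](_ : X = alpha * l2 / 4 * (4 * X / (alpha * l2))); last first.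
      by field; nz.
    apply: ler_wpM2l => //; rewrite divr_ge0 //; lra.
  have PX : forall X, 0 < X -> 2 * alpha * l2 / X <= L -> p n <= X.
    move=> X X0 hX; apply: (le_trans pup).
    have := @inv_mono R (2 * alpha * l2) (2 * alpha * l2 / X) L ltac:(rewrite !mulr_ge0 //; lra) ltac:(rewrite divr_gt0 // !mulr_gt0 //; lra) hX.
    by rewrite (_ : 2 * alpha * l2 / (2 * alpha * l2 / X) = X) //; field; nz.
  have A2 : 2 <= n%:R * p n by apply: AX.
  have A8 : 8 / eps <= n%:R * p n by apply: AX.
  have AM : M <= n%:R * p n.
    apply: le_trans (AX `|M| Lt3); exact: ler_norm.
  have p3 : p n <= 1 / 3.
    apply: PX; first lra.
    by rewrite (_ : 2 * alpha * l2 / (1 / 3) = t4) //; rewrite /t4; field.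
  have pe1 : p n <= eta / 2.
    apply: PX; first by rewrite divr_gt0.
    by rewrite (_ : 2 * alpha * l2 / (eta / 2) = t5) //; rewrite /t5; field; nz.
  have pe2 : p n <= eta / (2 * (alpha * gamma + eta)).
    apply: PX; first by rewrite divr_gt0 // mulr_gt0 //; lra.
    rewrite (_ : 2 * alpha * l2 / (eta / (2 * (alpha * gamma + eta))) = t6) //.
    by rewrite /t6; field; nz.
  have n0 : 0 <= n%:R :> R by [].
  have A3 : 3 * (n%:R * p n) <= n%:R by nra.
  split => //.
  have c0 : 0 < gamma * log2 (n%:R : R).
    by apply: mulr_gt0 => //; apply: divr_gt0; [exact: L0|exact: l20].
  have [j [j0 hj hd1 hd2]] := @ceil_nat R _ c0.
  move: u2; rewrite ler_norml => /andP[u2a u2b].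
  have e2g : gamma * (eta / (2 * gamma)) = eta / 2 by field; nz.
  have gu1 : alpha * gamma - eta / 2 <= gamma * u by nra.
  have gu2 : gamma * u <= alpha * gamma + eta / 2 by nra.
  have pc : p n * (gamma * log2 (n%:R : R)) = gamma * u by rewrite /u; ring.
  have hp2 : (alpha * gamma + eta) * p n <= eta / 2.
    have := ler_wpM2l (ltW (addr_gt0 ag0 eta0)) pe2.
    by rewrite (_ : (alpha * gamma + eta) * (eta / (2 * (alpha * gamma + eta))) = eta / 2) //; field; nz.
  have hr : `|(1 - p n) ^+ j.-1 - beta| <= delta * beta.
    apply: (@r_bound R (p n) (gamma * log2 (n%:R : R)) (- (alpha * gamma)) delta j.-1 (hp n) d0 hd1 hd2).
      rewrite pc -/eta; lra.
    rewrite pc -/eta mulNr.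
    have : gamma * u / (1 - p n) <= alpha * gamma + eta.
      rewrite ler_pdivrMr; [nra|lra].
    lra.
  apply: (@main_n R n (p n) gamma eps beta delta j (hp n) heps b0 b1 d0 de d12 j0 _ A2 A8 A3 hr).
  by move=> k; rewrite /long_frag hj.
apply: (squeeze_cvge (f := fun=> 0%E) (h := fun n => (C / (n%:R * p n))%:E)).
- have [N HN] := key 1.
  exists N => // n /= Nn; have [_ Hb] := HN n Nn.
  rewrite Hb andbT /geom_prob esum_ge0 // => x _.
  by rewrite lee_fin; apply: prodr_ge0 => i _; apply: (pmf_ge0 (hp n)).
- exact: cvg_cst.
- apply: cvg_EFin; first exact: nearW.
  apply/cvgrPdist_le => e e0.
  have [N HN] := key (C / e).
  exists N => // n /= Nn; have [HA _] := HN n Nn.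
  have A0 : 0 < n%:R * p n by apply: lt_le_trans HA; rewrite divr_gt0.
  rewrite sub0r normrN ger0_norm; last by rewrite divr_ge0 // ltW.
  by rewrite ler_pdivrMr // mulrC -ler_pdivrMr.
Qed.
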